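(* Let \((Q, \preccurlyeq_{Q})\) be a totally ordered set with a smallest element \(q_0\). Then there is a \(\preccurlyeq_{Q}\)-ultrametric \(d \colon Q^2 \to Q\) such that \(d(Q^2) = Q\) and \(\preccurlyeq_{Q}^{0} = \preccurlyeq_{Q}\), where \(\preccurlyeq_Q^0\) denotes the intersection of all partial orders \(\preccurlyeq\) on \(Q\) for which \(d\) is a \(\preccurlyeq\)-pseudoultrametric.
   Context: For a poset \((P,\preccurlyeq)\) with smallest element \(p_0\) and a nonempty set \(X\), \(d\colon X^2\to P\) is a \(\preccurlyeq\)-pseudoultrametric if \(d\) is symmetric, \(d(x,x)=p_0\) for all \(x\), and for every triple \(\langle x_1,x_2,x_3\rangle\) in \(X\) there is a permutation \((i_1,i_2,i_3)\) of \((1,2,3)\) with \(d(x_{i_1},x_{i_3})\preccurlyeq d(x_{i_1},x_{i_2})\) and \(d(x_{i_1},x_{i_2})=d(x_{i_2},x_{i_3})\) (in particular \((P,\preccurlyeq)\) must have a smallest element); it is a \(\preccurlyeq\)-ultrametric if moreover \(d(x,y)=p_0\) iff \(x=y\). \(d(Q^2)\) denotes the range of \(d\). *)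

(* Defs.v *)
Definition partial_order {X : Type} (R : X -> X -> Prop) : Prop :=
  (forall x, R x x) /\
  (forall x y, R x y -> R y x -> x = y) /\
  (forall x y z, R x y -> R y z -> R x z).

Definition total_order {X : Type} (R : X -> X -> Prop) : Prop :=
  partial_order R /\ (forall x y, R x y \/ R y x).

Definition is_smallest {P : Type} (R : P -> P -> Prop) (p0 : P) : Prop :=
  forall p, R p0 p.

Definition tri {X P : Type} (R : P -> P -> Prop) (d : X -> X -> P)
  (a b c : X) : Prop :=
  R (d a c) (d a b) /\ d a b = d b c.

Definition tri_perm {X P : Type} (R : P -> P -> Prop) (d : X -> X -> P)
  (x1 x2 x3 : X) : Prop :=
  tri R d x1 x2 x3 \/ tri R d x1 x3 x2 \/ tri R d x2 x1 x3 \/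
  tri R d x2 x3 x1 \/ tri R d x3 x1 x2 \/ tri R d x3 x2 x1.

Definition pseudoultrametric_at {X P : Type} (R : P -> P -> Prop)
  (d : X -> X -> P) (p0 : P) : Prop :=
  is_smallest R p0 /\
  (forall x y, d x y = d y x) /\
  (forall x, d x x = p0) /\
  (forall x1 x2 x3, tri_perm R d x1 x2 x3).

Definition pseudoultrametric {X P : Type} (R : P -> P -> Prop)
  (d : X -> X -> P) : Prop :=
  exists p0, pseudoultrametric_at R d p0.

Definition ultrametric {X P : Type} (R : P -> P -> Prop)
  (d : X -> X -> P) : Prop :=
  exists p0, pseudoultrametric_at R d p0 /\
    (forall x y, d x y = p0 <-> x = y).

(* Main.v *)
Require Import Defs.
From Stdlib Require Import Classical ClassicalEpsilon.

Definition dm {Q : Type} (leQ : Q -> Q -> Prop) (q0 : Q) (x y : Q) : Q :=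
  if excluded_middle_informative (x = y) then q0
  else if excluded_middle_informative (leQ x y) then y else x.

Section S.
Variables (Q : Type) (leQ : Q -> Q -> Prop) (q0 : Q).
Hypothesis HT : total_order leQ.
Hypothesis Hs : is_smallest leQ q0.

Lemma dm_xx x : dm leQ q0 x x = q0.
Proof. unfold dm. destruct (excluded_middle_informative (x = x)); congruence. Qed.

Lemma dm_le x y : x <> y -> leQ x y -> dm leQ q0 x y = y.
Proof. intros. unfold dm.
 destruct (excluded_middle_informative (x = y)); [congruence|].
 destruct (excluded_middle_informative (leQ x y)); tauto. Qed.

Lemma dm_ge x y : x <> y -> leQ y x -> dm leQ q0 x y = x.
Proof. intros. destruct HT as [[_ [A _]] _]. unfold dm.
 destruct (excluded_middle_informative (x = y)); [congruence|].
 destruct (excluded_middle_informative (leQ x y)); auto.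
 Qed.

Lemma dm_sym x y : dm leQ q0 x y = dm leQ q0 y x.
Proof. destruct (classic (x = y)) as [->|n]; auto.
 destruct HT as [_ T]. destruct (T x y).
 - rewrite (dm_le x y), (dm_ge y x); auto.
 - rewrite (dm_ge x y), (dm_le y x); auto. Qed.

Lemma tri_eq a b c : a = b -> tri leQ (dm leQ q0) a c b.
Proof. intros ->. split. rewrite dm_xx; apply Hs. apply dm_sym. Qed.

Lemma tri_sorted u v w : u <> v -> v <> w -> u <> w -> leQ u v -> leQ v w ->
  tri leQ (dm leQ q0) u w v.
Proof. intros. destruct HT as [[_ [_ Tr]] _]. split.
 - rewrite dm_le by auto. rewrite dm_le by eauto. auto.
 - rewrite dm_le by eauto. rewrite dm_ge by auto. auto. Qed.

Lemma tp x1 x2 x3 : tri_perm leQ (dm leQ q0) x1 x2 x3.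
Proof. unfold tri_perm.
 destruct (classic (x1 = x2)). { right; left. apply tri_eq; auto. }
 destruct (classic (x1 = x3)). { left. apply tri_eq; auto. }
 destruct (classic (x2 = x3)). { right; right; left. apply tri_eq; auto. }
 destruct HT as [[_ [_ Tr]] T].
 destruct (T x1 x2), (T x2 x3), (T x1 x3).
 - right; left. apply tri_sorted; eauto.
 - exfalso. destruct HT as [[_ [A _]] _]. apply H0; apply A; eauto.
 - left. apply tri_sorted; auto.
 - right; right; right; right; right. apply tri_sorted; auto.
 - right; right; right; left. apply tri_sorted; auto.
 - right; right; left. apply tri_sorted; auto.
 - exfalso. destruct HT as [[_ [A _]] _]. apply H0; apply A; eauto.
 - right; right; right; right; left. apply tri_sorted; auto.
Qed.

Lemma pu : pseudoultrametric_at leQ (dm leQ q0) q0.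
Proof. split; [exact Hs|]. split; [apply dm_sym|]. split; [apply dm_xx|]. apply tp. Qed.

Lemma main_R (R : Q -> Q -> Prop) p0 x y : partial_order R ->
  pseudoultrametric_at R (dm leQ q0) p0 -> leQ x y -> R x y.
Proof. intros [Rr [RA RT]] [Rs [_ [Rxx Rtp]]] Hxy.
 assert (p0 = q0) by (rewrite <- (Rxx x); apply dm_xx). subst p0.
 destruct (classic (x = y)) as [->|nxy]; auto.
 destruct (classic (x = q0)) as [->|nx]; [apply Rs|].
 destruct HT as [[_ [A _]] _].
 assert (ny : y <> q0). { intros ->. apply nx. apply A; auto. }
 assert (e1 : dm leQ q0 q0 x = x) by (apply dm_le; auto).
 assert (e2 : dm leQ q0 x q0 = x) by (apply dm_ge; auto).
 assert (e3 : dm leQ q0 x y = y) by (apply dm_le; auto).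
 assert (e4 : dm leQ q0 y x = y) by (apply dm_ge; auto).
 assert (e5 : dm leQ q0 q0 y = y) by (apply dm_le; auto).
 assert (e6 : dm leQ q0 y q0 = y) by (apply dm_ge; auto).
 destruct (Rtp q0 x y) as [H|[H|[H|[H|[H|H]]]]]; unfold tri in H;
  rewrite ?e1, ?e2, ?e3, ?e4, ?e5, ?e6 in H; destruct H; congruence || auto.
Qed.
End S.

Theorem proposition4p7 (Q : Type) (leQ : Q -> Q -> Prop) (q0 : Q) :
  total_order leQ -> is_smallest leQ q0 ->
  exists d : Q -> Q -> Q,
    ultrametric leQ d /\
    (forall q : Q, exists x y : Q, d x y = q) /\
    (forall x y : Q,
       (forall R : Q -> Q -> Prop,
          partial_order R -> pseudoultrametric R d -> R x y) <-> leQ x y).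
Proof.
  intros HT Hs. exists (dm leQ q0). split; [|split].
  - exists q0. split; [apply pu; auto|].
    intros x y; split; [|intros ->; apply dm_xx].
    intros E. apply NNPP; intro n. pose proof HT as [[_ [A _]] T].
    destruct (T x y).
    + rewrite dm_le in E; [|assumption|assumption]. subst y. apply n, A; [assumption|apply Hs].
    + rewrite dm_ge in E; [|exact HT|assumption|assumption]. subst x. apply n, A; [apply Hs|assumption].
  - intros q. destruct (classic (q = q0)) as [->|n].
    + exists q0, q0. apply dm_xx.
    + exists q0, q. apply dm_le; auto.
  - intros x y; split.
    + intros H. apply H; [apply HT|]. exists q0. apply pu; auto.
    + intros Hxy R PR [p0 Hp]. eapply main_R; eauto.
Qed.
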